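(* Let $k\ge1$ be an integer, $\alpha,\beta>0$, $b>0$, $\omega,\eta\in\mathbb{C}$ with $|\omega|=|\eta|=1$, $u,v\in[-1,1]$. Put $r=\sqrt{s^2+b^2}$, $R=s+r$, $w=-ib/R$, $X(u,v)=(\mathrm{Im}\,\omega^{k})(\mathrm{Im}\,\eta^{k})u+(\mathrm{Re}\,\omega^{k})(\mathrm{Re}\,\eta^{k})v$, $q(u,v)=\arccos X(u,v)$, \[A(s,q)=\prod_{l=0}^{k-1}\Big(s+ib\cos\Big(\frac{q+2\pi l}{k}\Big)\Big),\qquad B(s)=s+ib\,\mathrm{Re}(\omega\bar\eta),\] \[f_{I_{2k}}(s)=\frac{2^{k(\alpha+\beta)}}{rR^{k(\alpha+\beta)}}\frac{1-w^2}{1-w^{2k}}\,\frac{1-2w^{k}\mathrm{Re}(\omega^{k}\bar\eta^{k})+w^{2k}}{1-2\mathrm{Re}(\omega\bar\eta)w+w^2}\,\frac{1-w^{2k}}{(1-2w^{k}X(u,v)+w^{2k})^{\alpha+\beta+1}},\] \[g_{I_{k}}(s)=\frac{2^{k\alpha}}{rR^{k\alpha}}\frac{1-w^2}{1-w^{2k}}\,\frac{1-2w^{k}\mathrm{Re}(\omega^{k}\bar\eta^{k})+w^{2k}}{1-2\mathrm{Re}(\omega\bar\eta)w+w^2}\,\frac{1-w^{2k}}{(1-2w^{k}X(u,1)+w^{2k})^{\alpha+1}}.\] Then, for $s$ real and sufficiently large, \[f_{I_{2k}}(s)=\frac{A(s,q(1,1))}{B(s)[A(s,q(u,v))]^{\alpha+\beta+1}}=\frac{1}{B(s)[A(s,q(u,v))]^{\alpha+\beta}}+\frac{(-ib)^{k}\cos(q(u-1,v-1))}{2^{k-1}B(s)[A(s,q(u,v))]^{\alpha+\beta+1}},\]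 \[g_{I_{k}}(s)=\frac{A(s,q(1,1))}{B(s)[A(s,q(u,1))]^{\alpha+1}}=\frac{1}{B(s)[A(s,q(u,1))]^{\alpha}}+\frac{(-ib)^{k}\cos(q(u-1,0))}{2^{k-1}B(s)[A(s,q(u,1))]^{\alpha+1}}.\]
   Context: Non-integer powers are principal branches; $\arccos$ is extended to complex arguments so that $\cos(\arccos X)=X$ (needed since $X(u-1,v-1)$ may lie outside $[-1,1]$). *)

(* Defs.v *)
From Stdlib Require Import Reals.
From Coquelicot Require Import Coquelicot.
Open Scope R_scope.

(* Principal argument in (-PI, PI]. *)
Definition Carg (z : C) : R :=
  let x := Re z in let y := Im z in
  if Rlt_dec 0 x then atan (y / x)
  else if Rlt_dec x 0 then
    (if Rle_dec 0 y then atan (y / x) + PI else atan (y / x) - PI)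
  else if Rlt_dec 0 y then PI / 2
  else if Rlt_dec y 0 then - (PI / 2) else 0.

Definition Cexp (z : C) : C :=
  (RtoC (exp (Re z)) * (RtoC (cos (Im z)) + Ci * RtoC (sin (Im z))))%C.

Definition Clog (z : C) : C := (RtoC (ln (Cmod z)) + Ci * RtoC (Carg z))%C.

(* Principal power z^a = exp(a Log z) (with 0^a = 0). *)
Definition Cpowr (z : C) (a : R) : C :=
  if Req_EM_T (Cmod z) 0 then RtoC 0 else Cexp (RtoC a * Clog z)%C.

(* Complex cosine, principal square root and principal arccos;
   cos (Carccos z) = z holds for every complex z. *)
Definition Ccos (z : C) : C := ((Cexp (Ci * z) + Cexp (- (Ci * z))) / RtoC 2)%C.

Definition Csqrt (z : C) : C :=
  if Req_EM_T (Cmod z) 0 then RtoC 0 else Cexp (Clog z / RtoC 2)%C.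

Definition Carccos (z : C) : C :=
  (- Ci * Clog (z + Ci * Csqrt (RtoC 1 - z * z)))%C.

Fixpoint Cprod (n : nat) (F : nat -> C) : C :=
  match n with
  | O => RtoC 1
  | S m => (Cprod m F * F m)%C
  end.

Definition Xf (k : nat) (om et : C) (u v : R) : R :=
  Im (Cpow om k) * Im (Cpow et k) * u + Re (Cpow om k) * Re (Cpow et k) * v.

Definition qf (k : nat) (om et : C) (u v : R) : C := Carccos (RtoC (Xf k om et u v)).

Definition Af (k : nat) (b s : R) (q : C) : C :=
  Cprod k (fun l => (RtoC s + Ci * RtoC b *
                     Ccos ((q + RtoC (2 * PI * INR l)) / RtoC (INR k)))%C).

Definition Bf (b : R) (om et : C) (s : R) : C :=
  (RtoC s + Ci * RtoC b * RtoC (Re (om * Cconj et)))%C.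

Definition rf (b s : R) : R := sqrt (s ^ 2 + b ^ 2).
Definition Rf (b s : R) : R := s + rf b s.
Definition wf (b s : R) : C := (- (Ci * RtoC b) / RtoC (Rf b s))%C.

(* Common structure of f_{I_{2k}} and g_{I_k}: exponent gamma (= alpha+beta
   or alpha) and the value X0 (= X(u,v) or X(u,1)). *)
Definition fgen (k : nat) (b : R) (om et : C) (gam X0 s : R) : C :=
  let r := rf b s in let R0 := Rf b s in let w := wf b s in
  (RtoC (Rpower 2 (INR k * gam) / (r * Rpower R0 (INR k * gam)))
   * ((RtoC 1 - Cpow w 2) / (RtoC 1 - Cpow w (2 * k)))
   * ((RtoC 1 - RtoC 2 * Cpow w k * RtoC (Re (Cpow om k * Cconj (Cpow et k)))
        + Cpow w (2 * k))
      / (RtoC 1 - RtoC 2 * RtoC (Re (om * Cconj et)) * w + Cpow w 2))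
   * ((RtoC 1 - Cpow w (2 * k))
      / Cpowr (RtoC 1 - RtoC 2 * Cpow w k * RtoC X0 + Cpow w (2 * k)) (gam + 1)))%C.

Definition f_I2k (k : nat) (al be b : R) (om et : C) (u v s : R) : C :=
  fgen k b om et (al + be) (Xf k om et u v) s.

Definition g_Ik (k : nat) (al b : R) (om et : C) (u s : R) : C :=
  fgen k b om et al (Xf k om et u 1) s.

(* Main.v *)
Require Import Defs.
From Stdlib Require Import Reals Lra Psatz.
From Coquelicot Require Import Coquelicot.
Open Scope R_scope.

Lemma Ceq (x y : C) : fst x = fst y -> snd x = snd y -> x = y.
Proof. destruct x, y; simpl; intros -> ->; reflexivity. Qed.

Lemma Cexp_add (a b : C) : Cexp (a + b)%C = (Cexp a * Cexp b)%C.
Proof.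
  destruct a as [a1 a2], b as [b1 b2]; unfold Cexp; apply Ceq; simpl;
  rewrite exp_plus, cos_plus, sin_plus; ring.
Qed.

Lemma Cexp_0 : Cexp (RtoC 0) = RtoC 1.
Proof. unfold Cexp; apply Ceq; simpl; rewrite exp_0, cos_0, sin_0; ring. Qed.

Lemma Cexp_nz (a : C) : Cexp a <> RtoC 0.
Proof.
  intro H. assert (H1 := f_equal fst H). assert (H2 := f_equal snd H).
  unfold Cexp in *; destruct a as [a1 a2]; simpl in *.
  assert (E := exp_pos a1).
  assert (cos a2 = 0) by nra. assert (sin a2 = 0) by nra.
  assert (T := sin2_cos2 a2). unfold Rsqr in T. nra.
Qed.

Lemma Cexp_opp (a : C) : (Cexp a * Cexp (- a))%C = RtoC 1.
Proof. rewrite <- Cexp_add. replace (a + - a)%C with (RtoC 0) by ring. apply Cexp_0. Qed.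

Lemma Cexp_pow (a : C) (n : nat) : Cexp (RtoC (INR n) * a)%C = Cpow (Cexp a) n.
Proof.
  induction n as [|n IH].
  - simpl. replace (RtoC 0 * a)%C with (RtoC 0) by ring. apply Cexp_0.
  - rewrite S_INR. replace (RtoC (INR n + 1) * a)%C with (a + RtoC (INR n) * a)%C
      by (rewrite RtoC_plus; ring).
    rewrite Cexp_add, IH. simpl. reflexivity.
Qed.

Lemma Carg_spec (t : C) : t <> RtoC 0 ->
  Cmod t * cos (Carg t) = fst t /\ Cmod t * sin (Carg t) = snd t.
Proof.
  intro Ht. destruct t as [x y]. unfold Carg, Cmod, Re, Im; cbn [fst snd].
  assert (Hxy : x <> 0 \/ y <> 0).
  { destruct (Req_dec x 0), (Req_dec y 0); auto. subst; exfalso; apply Ht; reflexivity. }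
  assert (Hsq : forall x y, x <> 0 -> sqrt (x ^ 2 + y ^ 2) = Rabs x * sqrt (1 + (y / x)²)).
  { intros a c Ha. replace (a ^ 2 + c ^ 2) with ((Rabs a)² * (1 + (c/a)²)).
    - rewrite sqrt_mult. rewrite sqrt_Rsqr by apply Rabs_pos. reflexivity.
      apply Rle_0_sqr. assert (0 <= (c/a)²) by apply Rle_0_sqr. lra.
    - rewrite <- Rsqr_abs. unfold Rsqr. field. auto. }
  assert (Hpos : forall u, 0 < sqrt (1 + u²)).
  { intro u. apply sqrt_lt_R0. assert (0 <= u²) by apply Rle_0_sqr. lra. }
  destruct (Rlt_dec 0 x) as [Hx|Hx].
  - rewrite Hsq by lra. rewrite Rabs_right by lra. rewrite cos_atan, sin_atan.
    specialize (Hpos (y/x)). split; field; lra.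
  - destruct (Rlt_dec x 0) as [Hx'|Hx'].
    + rewrite Hsq by lra. rewrite Rabs_left by lra. specialize (Hpos (y/x)).
      destruct (Rle_dec 0 y).
      * rewrite cos_plus, sin_plus, cos_PI, sin_PI, cos_atan, sin_atan. split; field; lra.
      * unfold Rminus. rewrite cos_plus, sin_plus, cos_neg, sin_neg, cos_PI, sin_PI, cos_atan, sin_atan.
        split; field; lra.
    + assert (x = 0) by lra. subst x.
      replace (0 ^ 2 + y ^ 2) with (y * y) by ring.
      destruct (Rlt_dec 0 y).
      * rewrite sqrt_square by lra. rewrite cos_PI2, sin_PI2. split; ring.
      * destruct (Rlt_dec y 0).
        -- replace (y * y) with (-y * -y) by ring. rewrite sqrt_square by lra.
           rewrite cos_neg, sin_neg, cos_PI2, sin_PI2. split; ring.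
        -- exfalso. destruct Hxy; lra.
Qed.

Lemma Cexp_Clog (t : C) : t <> RtoC 0 -> Cexp (Clog t) = t.
Proof.
  intro Ht. destruct (Carg_spec t Ht) as [H1 H2].
  assert (Hm : 0 < Cmod t) by (apply Cmod_gt_0; exact Ht).
  unfold Cexp, Clog. apply Ceq; simpl;
  replace (ln (Cmod t) + (0 * Carg t - 1 * 0)) with (ln (Cmod t)) by ring;
  replace (0 + (0 * 0 + 1 * Carg t)) with (Carg t) by ring;
  rewrite exp_ln by exact Hm; lra.
Qed.

Lemma Ci2 : (Ci * Ci)%C = Copp (RtoC 1).
Proof. apply Ceq; simpl; ring. Qed.

Lemma Csqrt_sq (w : C) : (Csqrt w * Csqrt w)%C = w.
Proof.
  unfold Csqrt. destruct (Req_EM_T (Cmod w) 0) as [H|H].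
  - apply Cmod_eq_0 in H. subst. ring.
  - rewrite <- Cexp_add. replace (Clog w / 2 + Clog w / 2)%C with (Clog w) by field.
    apply Cexp_Clog. intro E; subst; apply H; apply Cmod_0.
Qed.

Lemma Ccos_Carccos (z : C) : Ccos (Carccos z) = z.
Proof.
  unfold Ccos, Carccos.
  set (S0 := Csqrt (1 - z * z)).
  set (t := (z + Ci * S0)%C).
  assert (HS : (S0 * S0)%C = (1 - z * z)%C) by apply Csqrt_sq.
  assert (Ht1 : (t * (z - Ci * S0))%C = RtoC 1).
  { unfold t. replace ((z + Ci * S0) * (z - Ci * S0))%C with (z * z - (Ci * Ci) * (S0 * S0))%C by ring.
    rewrite Ci2, HS. ring. }
  assert (Ht : t <> RtoC 0).
  { intro E. rewrite E in Ht1. rewrite Cmult_0_l in Ht1.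
    apply (f_equal fst) in Ht1. simpl in Ht1. lra. }
  replace (Ci * (- Ci * Clog t))%C with (- (Ci * Ci) * Clog t)%C by ring.
  rewrite Ci2. replace (- (- RtoC 1) * Clog t)%C with (Clog t) by ring.
  rewrite Cexp_Clog by exact Ht.
  assert (E : Cexp (- Clog t) = (z - Ci * S0)%C).
  { assert (H := Cexp_opp (Clog t)). rewrite Cexp_Clog in H by exact Ht.
    transitivity ((t * Cexp (- Clog t)) * (z - Ci * S0))%C.
    - replace ((t * Cexp (- Clog t)) * (z - Ci * S0))%C with ((t * (z - Ci * S0)) * Cexp (- Clog t))%C by ring.
      rewrite Ht1. ring.
    - rewrite H. ring. }
  rewrite E. unfold t. field.
Qed.

Lemma Cpowr_nz (z : C) (a : R) : z <> RtoC 0 -> Cpowr z a <> RtoC 0.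
Proof.
  intro Hz. unfold Cpowr. destruct (Req_EM_T (Cmod z) 0) as [H|H].
  - apply Cmod_eq_0 in H. contradiction.
  - apply Cexp_nz.
Qed.

Lemma Cmod_nz (z : C) : z <> RtoC 0 -> Cmod z <> 0.
Proof. intros Hz H. apply Cmod_eq_0 in H. contradiction. Qed.

Lemma Cpowr_S (z : C) (a : R) : z <> RtoC 0 -> Cpowr z (a + 1) = (Cpowr z a * z)%C.
Proof.
  intro Hz. unfold Cpowr. destruct (Req_EM_T (Cmod z) 0) as [H|H].
  - apply Cmod_eq_0 in H. contradiction.
  - rewrite <- (Cexp_Clog z Hz) at 3. rewrite <- Cexp_add. f_equal.
    rewrite RtoC_plus. ring.
Qed.

Lemma RtoC_scale (c x y : R) : (RtoC c * (x, y))%C = (c * x, c * y).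
Proof. apply Ceq; simpl; ring. Qed.

Lemma Carg_scale (c : R) (z : C) : 0 < c -> Carg (RtoC c * z)%C = Carg z.
Proof.
  intro Hc. destruct z as [x y]. rewrite RtoC_scale. unfold Carg, Re, Im; cbn [fst snd].
  destruct (Req_dec x 0) as [Hx|Hx].
  - subst x. rewrite Rmult_0_r.
    repeat match goal with |- context [Rlt_dec ?a ?b] => destruct (Rlt_dec a b)
                         | |- context [Rle_dec ?a ?b] => destruct (Rle_dec a b) end;
    try reflexivity; exfalso; nra.
  - replace (c * y / (c * x)) with (y / x) by (field; lra).
    repeat match goal with |- context [Rlt_dec ?a ?b] => destruct (Rlt_dec a b)
                         | |- context [Rle_dec ?a ?b] => destruct (Rle_dec a b) end;
    try reflexivity; exfalso; nra.
Qed.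

Lemma Cmod_scale (c : R) (z : C) : 0 < c -> Cmod (RtoC c * z)%C = c * Cmod z.
Proof. intro Hc. rewrite Cmod_mult, Cmod_R, Rabs_right by lra. reflexivity. Qed.

Lemma Cpowr_scale (c : R) (z : C) (a : R) : 0 < c -> z <> RtoC 0 ->
  Cpowr (RtoC c * z)%C a = (RtoC (Rpower c a) * Cpowr z a)%C.
Proof.
  intros Hc Hz. assert (Hm : Cmod z <> 0) by (apply Cmod_nz; auto).
  assert (Hm' : 0 < Cmod z) by (apply Cmod_gt_0; auto).
  unfold Cpowr. destruct (Req_EM_T (Cmod z) 0) as [H|_]; [contradiction|].
  rewrite Cmod_scale by lra.
  destruct (Req_EM_T (c * Cmod z) 0) as [H|_]; [exfalso; nra|].
  unfold Clog. rewrite Carg_scale by lra. rewrite Cmod_scale by lra.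
  rewrite ln_mult by lra. rewrite RtoC_plus.
  replace (RtoC a * (RtoC (ln c) + RtoC (ln (Cmod z)) + Ci * RtoC (Carg z)))%C
    with (RtoC (a * ln c) + RtoC a * (RtoC (ln (Cmod z)) + Ci * RtoC (Carg z)))%C
    by (rewrite RtoC_mult; ring).
  rewrite Cexp_add. f_equal.
  unfold Rpower, Cexp. apply Ceq; simpl; rewrite cos_0, sin_0; ring.
Qed.


Lemma Cprod_ext (n : nat) (F G : nat -> C) :
  (forall l, (l < n)%nat -> F l = G l) -> Cprod n F = Cprod n G.
Proof.
  induction n as [|n IH]; intro H; simpl; [reflexivity|].
  rewrite IH by (intros; apply H; lia). rewrite H by lia. reflexivity.
Qed.

Lemma Cprod_mul (n : nat) (F G : nat -> C) :
  Cprod n (fun l => F l * G l)%C = (Cprod n F * Cprod n G)%C.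
Proof. induction n as [|n IH]; simpl; [ring|]. rewrite IH. ring. Qed.

Lemma Cprod_const (n : nat) (a : C) : Cprod n (fun _ => a) = Cpow a n.
Proof. induction n as [|n IH]; simpl; [reflexivity|]. rewrite IH. ring. Qed.

Lemma cos_ne_1 (x : R) : 0 < x < 2 * PI -> cos x <> 1.
Proof.
  intros [H1 H2] E. assert (HP := PI_RGT_0).
  destruct (Rle_dec x PI).
  - assert (x = 0) by (apply cos_inj; try lra; rewrite cos_0; exact E). lra.
  - assert (E' : cos (2 * PI - x) = cos x).
    { rewrite cos_minus, cos_2PI, sin_2PI. ring. }
    assert (2 * PI - x = 0) by (apply cos_inj; try lra; rewrite cos_0, E'; exact E). lra.
Qed.

Lemma Cexp_iR (t : R) : Cexp (Ci * RtoC t)%C = (cos t, sin t).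
Proof.
  unfold Cexp. apply Ceq; simpl;
  replace (0 * t - 1 * 0) with 0 by ring; replace (0 * 0 + 1 * t) with t by ring;
  rewrite exp_0; ring.
Qed.

Definition PU_stmt : Prop := forall (e y : C) (k : nat), (0 < k)%nat -> Cpow e k = RtoC 1 ->
  (forall m, (0 < m)%nat -> (m < k)%nat -> Cpow e m <> RtoC 1) ->
  Cprod k (fun l => Cminus y (Cpow e l)) = Cminus (Cpow y k) (RtoC 1).

Lemma prod_1m (HPU : PU_stmt) (e x : C) (k : nat) : (0 < k)%nat -> Cpow e k = RtoC 1 ->
  (forall m, (0 < m)%nat -> (m < k)%nat -> Cpow e m <> RtoC 1) ->
  Cprod k (fun l => RtoC 1 - x * Cpow e l)%C = (RtoC 1 - Cpow x k)%C.
Proof.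
  intros Hk He Hm.
  destruct (Ceq_dec x 0) as [Hx|Hx].
  - subst x. rewrite (Cprod_ext _ _ (fun _ => RtoC 1)) by (intros; ring).
    rewrite Cprod_const, Cpow_1_l. destruct k; [lia|]. simpl. ring.
  - rewrite (Cprod_ext _ _ (fun l => x * (/ x - Cpow e l))%C) by (intros; field; auto).
    rewrite Cprod_mul, Cprod_const.
    replace (Cprod k (fun l => / x - Cpow e l)%C) with (Cprod k (fun l => Cminus (/ x) (Cpow e l))) by reflexivity.
    rewrite HPU by auto. unfold Cminus.
    rewrite Cpow_inv by auto. field. apply Cpow_nz. auto.
Qed.

Lemma eps_pow (t : R) (m : nat) : Cpow (Cexp (Ci * RtoC t)) m = (cos (INR m * t), sin (INR m * t)).
Proof.
  rewrite <- Cexp_pow. replace (RtoC (INR m) * (Ci * RtoC t))%C with (Ci * RtoC (INR m * t))%C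
    by (rewrite RtoC_mult; ring).
  apply Cexp_iR.
Qed.

Lemma eps_prim (k : nat) (sg : R) : (0 < k)%nat -> (sg = 1 \/ sg = -1) ->
  let e := Cexp (Ci * RtoC (sg * (2 * PI / INR k)))%C in
  Cpow e k = RtoC 1 /\ (forall m, (0 < m)%nat -> (m < k)%nat -> Cpow e m <> RtoC 1).
Proof.
  intros Hk Hs e. subst e. assert (HK : 0 < INR k) by (apply lt_0_INR; lia).
  split.
  - rewrite eps_pow.
    replace (INR k * (sg * (2 * PI / INR k))) with (sg * (2 * PI)) by (field; lra).
    apply Ceq; simpl; destruct Hs; subst sg;
      rewrite ?Rmult_1_l, ?cos_2PI, ?sin_2PI; try reflexivity;
      replace (-1 * (2 * PI)) with (- (2 * PI)) by ring;
      rewrite ?cos_neg, ?sin_neg, ?cos_2PI, ?sin_2PI; ring.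
  - intros m Hm1 Hm2 E. rewrite eps_pow in E.
    apply (f_equal fst) in E. simpl in E.
    assert (HM : 0 < INR m < INR k) by (split; [apply lt_0_INR | apply lt_INR]; lia).
    assert (HP := PI_RGT_0).
    apply (cos_ne_1 (INR m * (2 * PI / INR k))).
    + split.
      * apply Rmult_lt_0_compat; [lra|]. apply Rdiv_lt_0_compat; lra.
      * replace (INR m * (2 * PI / INR k)) with ((2 * PI) * (INR m / INR k)) by (field; lra).
        rewrite <- (Rmult_1_r (2 * PI)) at 2. apply Rmult_lt_compat_l; [lra|].
        apply (Rmult_lt_reg_r (INR k)); [lra|]. unfold Rdiv. rewrite Rmult_assoc, Rinv_l by lra. lra.
    + destruct Hs; subst sg.
      * rewrite Rmult_1_l in E. exact E.
      * replace (INR m * (-1 * (2 * PI / INR k))) with (- (INR m * (2 * PI / INR k))) in E by ring.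
        rewrite cos_neg in E. exact E.
Qed.

Section Scal.
Variables (b s : R).
Hypotheses (Hb : 0 < b) (Hs : 0 < s).

Lemma rf_sq : rf b s * rf b s = s * s + b * b.
Proof. unfold rf. rewrite sqrt_sqrt by nra. ring. Qed.

Lemma rf_gt : b < rf b s /\ s < rf b s.
Proof.
  assert (H := rf_sq). assert (0 <= rf b s) by (unfold rf; apply sqrt_pos). split; nra.
Qed.

Lemma Rf_pos : 0 < Rf b s.
Proof. unfold Rf. destruct rf_gt. lra. Qed.

Lemma Rf_gt_b : b < Rf b s.
Proof. unfold Rf. destruct rf_gt. lra. Qed.

Lemma wf_eq : wf b s = (0, - (b / Rf b s)).
Proof.
  assert (H := Rf_pos). unfold wf. apply Ceq; simpl; field; lra.
Qed.

Lemma Rw : (RtoC (Rf b s) * wf b s)%C = (- (Ci * RtoC b))%C.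
Proof. assert (H := Rf_pos). rewrite wf_eq. apply Ceq; simpl; field; lra. Qed.

Lemma s_id : (RtoC (Rf b s / 2) * (RtoC 1 + wf b s * wf b s))%C = RtoC s.
Proof.
  assert (H := Rf_pos). assert (Hr := rf_sq). rewrite wf_eq. apply Ceq; simpl.
  - unfold Rf in *. field_simplify_eq; [| lra]. nra.
  - field. lra.
Qed.

Lemma w_small : Cmod (wf b s) < 1.
Proof.
  assert (H := Rf_pos). assert (H2 := Rf_gt_b). rewrite wf_eq. unfold Cmod; simpl.
  replace (0 * (0 * 1) + - (b / Rf b s) * (- (b / Rf b s) * 1)) with ((b / Rf b s)²) by (unfold Rsqr; ring).
  rewrite sqrt_Rsqr.
  - apply (Rmult_lt_reg_r (Rf b s)); [lra|]. unfold Rdiv. rewrite Rmult_assoc, Rinv_l by lra. lra.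
  - apply Rlt_le, Rdiv_lt_0_compat; lra.
Qed.

End Scal.

Lemma INR_C_nz (k : nat) : (0 < k)%nat -> RtoC (INR k) <> RtoC 0.
Proof.
  intros Hk E. apply RtoC_inj in E. assert (0 < INR k) by (apply lt_0_INR; lia). lra.
Qed.

Lemma factor_id (b s : R) (T T' : C) : 0 < b -> 0 < s -> (T * T')%C = RtoC 1 ->
  (RtoC s + Ci * RtoC b * ((T + T') / RtoC 2))%C
  = (RtoC (Rf b s / 2) * ((RtoC 1 - wf b s * T) * (RtoC 1 - wf b s * T')))%C.
Proof.
  intros Hb Hs HT.
  rewrite <- (s_id b s Hb Hs).
  assert (E : (Ci * RtoC b)%C = (- (RtoC (Rf b s) * wf b s))%C) by (rewrite (Rw b s Hb Hs); ring).
  rewrite E.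
  replace (RtoC (Rf b s / 2)) with (RtoC (Rf b s) / RtoC 2)%C
    by (apply Ceq; simpl; field).
  transitivity (RtoC (Rf b s) / RtoC 2 * (RtoC 1 - wf b s * T - wf b s * T' + wf b s * wf b s * (T * T')))%C.
  - rewrite HT. field.
  - ring.
Qed.

Lemma Af_formula (HPU : PU_stmt) (k : nat) (b s : R) (q : C) : (1 <= k)%nat -> 0 < b -> 0 < s ->
  Af k b s q = (RtoC ((Rf b s / 2) ^ k) *
     (RtoC 1 - RtoC 2 * Ccos q * Cpow (wf b s) k + Cpow (wf b s) (2 * k)))%C.
Proof.
  intros Hk Hb Hs. assert (Hk0 : (0 < k)%nat) by lia.
  assert (HK := INR_C_nz k Hk0).
  set (th := 2 * PI / INR k).
  set (e1 := Cexp (Ci * RtoC (1 * th))%C).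
  set (e2 := Cexp (Ci * RtoC (-1 * th))%C).
  set (z1 := Cexp (Ci * q / RtoC (INR k))%C).
  set (z2 := Cexp (- (Ci * q / RtoC (INR k)))%C).
  set (w := wf b s).
  unfold Af.
  rewrite (Cprod_ext _ _ (fun l => RtoC (Rf b s / 2) *
            ((RtoC 1 - (w * z1) * Cpow e1 l) * (RtoC 1 - (w * z2) * Cpow e2 l)))%C).
  2:{ intros l Hl. unfold Ccos.
      assert (E1 : Cexp (Ci * ((q + RtoC (2 * PI * INR l)) / RtoC (INR k)))%C = (z1 * Cpow e1 l)%C).
      { unfold z1, e1. rewrite <- Cexp_pow, <- Cexp_add. f_equal.
        unfold th. destruct q as [q1 q2].
        assert (0 < INR k) by (apply lt_0_INR; lia).
        apply Ceq; simpl; field; lra. }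
      assert (E2 : Cexp (- (Ci * ((q + RtoC (2 * PI * INR l)) / RtoC (INR k))))%C = (z2 * Cpow e2 l)%C).
      { unfold z2, e2. rewrite <- Cexp_pow, <- Cexp_add. f_equal.
        unfold th. destruct q as [q1 q2].
        assert (0 < INR k) by (apply lt_0_INR; lia).
        apply Ceq; simpl; field; lra. }
      rewrite (factor_id b s _ _ Hb Hs).
      - rewrite E1, E2. fold w. ring.
      - apply Cexp_opp. }
  rewrite Cprod_mul, Cprod_const, Cprod_mul.
  destruct (eps_prim k 1 Hk0 (or_introl eq_refl)) as [P1 P2].
  destruct (eps_prim k (-1) Hk0 (or_intror eq_refl)) as [Q1 Q2].
  rewrite (prod_1m HPU e1 (w * z1) k Hk0 P1 P2).
  rewrite (prod_1m HPU e2 (w * z2) k Hk0 Q1 Q2).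
  rewrite !Cpow_mult_l.
  assert (Z1 : Cpow z1 k = Cexp (Ci * q)).
  { unfold z1. rewrite <- Cexp_pow. f_equal. field. exact HK. }
  assert (Z2 : Cpow z2 k = Cexp (- (Ci * q))).
  { unfold z2. rewrite <- Cexp_pow. f_equal. field. exact HK. }
  rewrite Z1, Z2, RtoC_pow.
  replace (2 * k)%nat with (k + k)%nat by lia. rewrite Cpow_add_r.
  unfold Ccos.
  assert (HE := Cexp_opp (Ci * q)).
  transitivity (Cpow (RtoC (Rf b s / 2)) k *
     (RtoC 1 - Cpow w k * (Cexp (Ci * q) + Cexp (- (Ci * q))) + Cpow w k * Cpow w k * (Cexp (Ci * q) * Cexp (- (Ci * q)))))%C.
  - ring.
  - rewrite HE. field.
Qed.

Lemma Cmod_pow_lt (y : C) (n : nat) : Cmod y < 1 -> (1 <= n)%nat -> Cmod (Cpow y n) < 1.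
Proof.
  intros Hy Hn. rewrite Cmod_pow. assert (H0 := Cmod_ge_0 y).
  induction n as [|n IH]; [lia|].
  destruct n as [|n]; simpl; [lra|].
  simpl in IH. assert (Cmod y * Cmod y ^ n < 1) by (apply IH; lia).
  assert (0 <= Cmod y * Cmod y ^ n) by (apply Rmult_le_pos; [lra| apply pow_le; lra]).
  nra.
Qed.

Lemma one_minus_nz (y : C) : Cmod y < 1 -> (RtoC 1 - y)%C <> RtoC 0.
Proof.
  intros Hy E. assert (y = RtoC 1) by (apply (f_equal (fun z => RtoC 1 - z)%C) in E; 
    replace (RtoC 1 - (RtoC 1 - y))%C with y in E by ring; rewrite E; ring).
  subst. rewrite Cmod_R, Rabs_R1 in Hy. lra.
Qed.

Lemma D_nz (X : R) (y : C) : -1 <= X <= 1 -> Cmod y < 1 ->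
  (RtoC 1 - RtoC 2 * y * RtoC X + y * y)%C <> RtoC 0.
Proof.
  intros HX Hy.
  set (S := sqrt (1 - X * X)).
  assert (HS : S * S = 1 - X * X) by (unfold S; apply sqrt_sqrt; nra).
  set (E := (X, S) : C). set (E' := (X, - S) : C).
  assert (HE : Cmod E = 1).
  { unfold Cmod, E; simpl. replace (X * (X * 1) + S * (S * 1)) with 1 by nra. apply sqrt_1. }
  assert (HE' : Cmod E' = 1).
  { unfold Cmod, E'; simpl. replace (X * (X * 1) + - S * (- S * 1)) with 1 by nra. apply sqrt_1. }
  assert (Hf : (RtoC 1 - RtoC 2 * y * RtoC X + y * y)%C = ((RtoC 1 - E * y) * (RtoC 1 - E' * y))%C).
  { destruct y as [y1 y2]. unfold E, E'. assert (S * S * (y2 * y2) = (1 - X * X) * (y2 * y2)) by (rewrite HS; ring). assert (S * S * (y1 * y1) = (1 - X * X) * (y1 * y1)) by (rewrite HS; ring). assert (S * S * (y1 * y2) = (1 - X * X) * (y1 * y2)) by (rewrite HS; ring). apply Ceq; simpl; nra. }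
  rewrite Hf. apply Cmult_neq_0; apply one_minus_nz.
  - rewrite Cmod_mult, HE. lra.
  - rewrite Cmod_mult, HE'. lra.
Qed.

Lemma Xf_bound (k : nat) (om et : C) (u v : R) : Cmod om = 1 -> Cmod et = 1 ->
  -1 <= u <= 1 -> -1 <= v <= 1 -> -1 <= Xf k om et u v <= 1.
Proof.
  intros Ho He Hu Hv. unfold Xf.
  assert (Ha : Cmod (Cpow om k) = 1) by (rewrite Cmod_pow, Ho; apply pow1).
  assert (Hb : Cmod (Cpow et k) = 1) by (rewrite Cmod_pow, He; apply pow1).
  destruct (Cpow om k) as [q p], (Cpow et k) as [n m]. unfold Cmod, Re, Im in *; cbn [fst snd] in *.
  assert (H1 : q * q + p * p = 1).
  { assert (H := sqrt_sqrt (q ^ 2 + p ^ 2) ltac:(nra)). rewrite Ha in H. simpl in H. nra. }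
  assert (H2 : n * n + m * m = 1).
  { assert (H := sqrt_sqrt (n ^ 2 + m ^ 2) ltac:(nra)). rewrite Hb in H. simpl in H. nra. }
  assert (0 <= (p - m * u) ^ 2) by apply pow2_ge_0.
  assert (0 <= (q - n * v) ^ 2) by apply pow2_ge_0.
  assert (0 <= (p + m * u) ^ 2) by apply pow2_ge_0.
  assert (0 <= (q + n * v) ^ 2) by apply pow2_ge_0.
  assert (m * m * (u * u) <= m * m) by (assert (u * u <= 1) by nra; nra).
  assert (n * n * (v * v) <= n * n) by (assert (v * v <= 1) by nra; nra).
  split; nra.
Qed.

Lemma key_B (b s c : R) : 0 < b -> 0 < s ->
  ((RtoC s + Ci * RtoC b * RtoC c) * (RtoC 1 - Cpow (wf b s) 2))%C
  = (RtoC (rf b s) * (RtoC 1 - RtoC 2 * RtoC c * wf b s + Cpow (wf b s) 2))%C.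
Proof.
  intros Hb Hs. assert (H := Rf_pos b s Hb Hs). assert (Hr := rf_sq b s).
  rewrite (wf_eq b s Hb Hs). unfold Rf in *. set (r := rf b s) in *.
  assert (E2 : r ^ 2 = s ^ 2 + b ^ 2) by nra. assert (E3 : r ^ 3 = r * (s ^ 2 + b ^ 2)) by (rewrite <- E2; ring).
  apply Ceq; simpl; field_simplify_eq; try lra; rewrite ?E3, ?E2; ring.
Qed.

Lemma Rpower_P (R0 : R) (k : nat) (g : R) : 0 < R0 ->
  Rpower ((R0 / 2) ^ k) g * Rpower 2 (INR k * g) = Rpower R0 (INR k * g).
Proof.
  intro H. rewrite <- Rpower_pow by lra. rewrite Rpower_mult.
  unfold Rpower. rewrite <- exp_plus. f_equal. rewrite ln_div by lra. ring.
Qed.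

Lemma RtoC_nz (x : R) : x <> 0 -> RtoC x <> RtoC 0.
Proof. intros H E. apply RtoC_inj in E. contradiction. Qed.

Lemma Xf11 (k : nat) (om et : C) : Re (Cpow om k * Cconj (Cpow et k)) = Xf k om et 1 1.
Proof. unfold Xf. destruct (Cpow om k), (Cpow et k). unfold Re, Im; simpl. ring. Qed.

Lemma main_gen (HPU : PU_stmt) (k : nat) (b : R) (om et : C) (gam X0 X1 s : R) :
  (1 <= k)%nat -> 0 < b -> 0 < s -> -1 <= X0 <= 1 -> X1 = X0 - Xf k om et 1 1 ->
  let A0 := Af k b s (Carccos (RtoC X0)) in
  let A11 := Af k b s (qf k om et 1 1) in
  let B := Bf b om et s in
  fgen k b om et gam X0 s = (A11 / (B * Cpowr A0 (gam + 1)))%C /\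
  (A11 / (B * Cpowr A0 (gam + 1)))%C =
  (RtoC 1 / (B * Cpowr A0 gam) +
   Cpow (- (Ci * RtoC b)) k * RtoC X1 / (RtoC (2 ^ (k - 1)) * B * Cpowr A0 (gam + 1)))%C.
Proof.
  intros Hk Hb Hs HX0 HX1 A0 A11 B.
  set (w := wf b s). set (R0 := Rf b s). set (r := rf b s).
  set (c := Re (om * Cconj et)).
  set (ck := Re (Cpow om k * Cconj (Cpow et k))).
  assert (HR0 : 0 < R0) by (apply Rf_pos; auto).
  assert (Hr : 0 < r) by (destruct (rf_gt b s Hb Hs); unfold r; lra).
  set (P := (R0 / 2) ^ k).
  assert (HP : 0 < P) by (apply pow_lt; lra).
  set (D := (RtoC 1 - RtoC 2 * Cpow w k * RtoC X0 + Cpow w (2 * k))%C).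
  set (N := (RtoC 1 - RtoC 2 * Cpow w k * RtoC ck + Cpow w (2 * k))%C).
  set (Dd := (RtoC 1 - RtoC 2 * RtoC c * w + Cpow w 2)%C).
  assert (Hw := w_small b s Hb Hs). fold w in Hw.
  assert (H2k : Cpow w (2 * k) = (Cpow w k * Cpow w k)%C).
  { replace (2 * k)%nat with (k + k)%nat by lia. apply Cpow_add_r. }
  assert (HD : D <> RtoC 0).
  { unfold D. rewrite H2k. apply D_nz; auto. apply Cmod_pow_lt; auto. }
  assert (HA0 : A0 = (RtoC P * D)%C).
  { unfold A0. rewrite (Af_formula HPU) by auto. rewrite Ccos_Carccos. unfold P, D; fold w R0. f_equal. ring. }
  assert (HA11 : A11 = (RtoC P * N)%C).
  { unfold A11, qf. rewrite (Af_formula HPU) by auto. rewrite Ccos_Carccos. unfold P, N, ck; fold w R0.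
    rewrite Xf11. f_equal. ring. }
  set (Cg := Cpowr D gam).
  assert (HCg : Cg <> RtoC 0) by (apply Cpowr_nz; auto).
  set (Q := Rpower P gam).
  assert (HQ : 0 < Q) by (unfold Q, Rpower; apply exp_pos).
  assert (HAp1 : Cpowr A0 (gam + 1) = (RtoC (Q * P) * (Cg * D))%C).
  { rewrite HA0, Cpowr_scale by auto. rewrite Cpowr_S by auto. fold Cg.
    unfold Q. rewrite Rpower_plus, Rpower_1 by auto. reflexivity. }
  assert (HAp : Cpowr A0 gam = (RtoC Q * Cg)%C).
  { rewrite HA0, Cpowr_scale by auto. reflexivity. }
  assert (HB : B <> RtoC 0).
  { intro E. apply (f_equal fst) in E. unfold B, Bf in E. simpl in E. lra. }
  assert (HPC : RtoC P <> RtoC 0) by (apply RtoC_nz; lra).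
  assert (HQC : RtoC Q <> RtoC 0) by (apply RtoC_nz; lra).
  assert (HrC : RtoC r <> RtoC 0) by (apply RtoC_nz; lra).
  split.
  - unfold f_I2k, fgen. cbv zeta. fold w R0 r. fold c ck. fold D N Dd.
    rewrite HA11, HAp1.
    assert (Hpre : Rpower 2 (INR k * gam) / (r * Rpower R0 (INR k * gam)) = / (r * Q)).
    { rewrite <- (Rpower_P R0 k gam HR0). fold P Q.
      assert (0 < Rpower 2 (INR k * gam)) by (unfold Rpower; apply exp_pos). field. split; lra. }
    rewrite Hpre.
    assert (Hkey := key_B b s c Hb Hs). fold w r in Hkey.
    assert (HDd : Dd <> RtoC 0).
    { intro E. apply (f_equal fst) in E. unfold Dd, w in E. rewrite (wf_eq b s Hb Hs) in E.
      simpl in E. fold R0 in E. assert (Hbr := Rf_gt_b b s Hb Hs). fold R0 in Hbr.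
      assert (Ht : 0 < b / R0 < 1).
      { split. apply Rdiv_lt_0_compat; lra.
        apply (Rmult_lt_reg_r R0); [lra|]. unfold Rdiv. rewrite Rmult_assoc, Rinv_l by lra. lra. }
      nra. }
    assert (Hw2k : (RtoC 1 - Cpow w (2 * k))%C <> RtoC 0).
    { apply one_minus_nz. apply Cmod_pow_lt; auto. lia. }
    replace (RtoC 1 - Cpow w 2)%C with (RtoC r * Dd / B)%C.
    2:{ assert (Hk' : (B * (RtoC 1 - Cpow w 2))%C = (RtoC r * Dd)%C) by exact Hkey.
        rewrite <- Hk'. generalize (RtoC 1 - Cpow w 2)%C. intro z. clear - HB. field. exact HB. }
    rewrite Cpowr_S by exact HD. fold Cg.
    rewrite RtoC_inv by (apply Rmult_integral_contrapositive; split; lra).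
    rewrite !RtoC_mult. generalize (Cpow w (2 * k)) Hw2k. intros W2k Hw2k'. clearbody D N Dd Cg B.
    field. repeat split; auto.
  - rewrite HA11, HAp1, HAp, HX1, RtoC_minus, <- Xf11. fold ck.
    assert (HRw := Rw b s Hb Hs). fold R0 w in HRw. rewrite <- HRw, Cpow_mult_l.
    assert (HPe : P = R0 ^ k / (2 * 2 ^ (k - 1))).
    { unfold P. destruct k as [|k']; [lia|]. simpl. rewrite Nat.sub_0_r.
      unfold Rdiv. rewrite Rpow_mult_distr, pow_inv. field. apply pow_nonzero. lra. }
    assert (H2k1 : 2 ^ (k - 1) <> 0) by (apply pow_nonzero; lra).
    assert (HRk : R0 ^ k <> 0) by (apply pow_nonzero; lra).
    rewrite RtoC_mult, HPe, RtoC_div, RtoC_mult, <- RtoC_pow.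
    2:{ apply Rmult_integral_contrapositive; split; lra. }
    apply RtoC_nz in H2k1. apply RtoC_nz in HRk.
    unfold N, D in *. generalize (Cpow w k) (Cpow w (2 * k)) HD. intros W W2 HD'.
    clearbody Cg B. clear - HB HQC HCg HD' H2k1 HRk.
    field. repeat split; auto.
Qed.

From HB Require Import structures.
From mathcomp Require Import all_boot all_order all_algebra.
From mathcomp Require Import complex Rstruct.

Module MC.
Import Order.TTheory GRing.Theory Num.Theory.
Local Open Scope ring_scope.

Definition phi (z : C) : R[i] := Complex z.1 z.2.

Lemma phiM (x y : C) : phi (Cmult x y) = phi x * phi y.
Proof. by case: x => a b; case: y => c d; rewrite /phi /=. Qed.
Lemma phiB (x y : C) : phi (Cminus x y) = phi x - phi y.
Proof. by case: x => a b; case: y => c d; rewrite /phi /=. Qed.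
Lemma phi1 : phi (RtoC 1%R) = 1.
Proof. by []. Qed.
Lemma phi_inj x y : phi x = phi y -> x = y.
Proof. by case: x => a b; case: y => c d; rewrite /phi /= => -[-> ->]. Qed.
Lemma phiX x n : phi (Cpow x n) = phi x ^+ n.
Proof. elim: n => [|n IH] //=. by rewrite phiM IH exprS. Qed.
Lemma phiP n F : phi (Cprod n F) = \prod_(0 <= i < n) phi (F i).
Proof. elim: n => [|n IH]; first by rewrite big_geq. by rewrite /= phiM IH big_nat_recr. Qed.

Lemma prod_unity_C (e y : C) (k : nat) : (0 < k)%N -> Cpow e k = RtoC 1%R ->
  (forall m, (0 < m)%N -> (m < k)%N -> Cpow e m <> RtoC 1%R) ->
  Cprod k (fun l => Cminus y (Cpow e l)) = Cminus (Cpow y k) (RtoC 1%R).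
Proof.
move=> k0 ek em; apply: phi_inj.
have prim : k.-primitive_root (phi e).
  apply/andP; split => //; apply/forallP => i; apply/eqP.
  have := ltn_ord i; rewrite leq_eqVlt => /orP[/eqP h|h].
  - by rewrite h eqxx; apply/unity_rootP; rewrite -phiX ek.
  - rewrite (ltn_eqF h); apply/negbTE/negP => /unity_rootP H; apply: (em i.+1) => //.
    by apply: phi_inj; rewrite phiX H.
rewrite phiP phiB phiX phi1.
under eq_bigr do rewrite phiB phiX.
have := congr1 (fun p => p.[phi y]) (factor_Xn_sub_1 prim).
by rewrite horner_prod hornerD hornerN hornerXn hornerC; under eq_bigr do rewrite hornerXsubC.
Qed.

Lemma PU : PU_stmt.
Proof.
move=> e y k /ssrnat.ltP k0 ek em; apply: prod_unity_C => //.
by move=> m /ssrnat.ltP h1 /ssrnat.ltP h2; apply: em.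
Qed.
End MC.

Delimit Scope C_scope with C.
Open Scope R_scope.

Theorem lemma15 (k : nat) (al be b : R) (om et : C) (u v : R) :
  le 1 k -> 0 < al -> 0 < be -> 0 < b ->
  Cmod om = 1 -> Cmod et = 1 ->
  -1 <= u <= 1 -> -1 <= v <= 1 ->
  exists S : R, forall s : R, S < s ->
    (f_I2k k al be b om et u v s
       = (Af k b s (qf k om et 1 1)
          / (Bf b om et s * Cpowr (Af k b s (qf k om et u v)) (al + be + 1)))%C
     /\ (Af k b s (qf k om et 1 1)
          / (Bf b om et s * Cpowr (Af k b s (qf k om et u v)) (al + be + 1)))%C
       = (RtoC 1 / (Bf b om et s * Cpowr (Af k b s (qf k om et u v)) (al + be))
          + Cpow (- (Ci * RtoC b)) k * Ccos (qf k om et (u - 1) (v - 1))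
            / (RtoC (2 ^ (Nat.sub k 1)) * Bf b om et s
               * Cpowr (Af k b s (qf k om et u v)) (al + be + 1)))%C)
    /\
    (g_Ik k al b om et u s
       = (Af k b s (qf k om et 1 1)
          / (Bf b om et s * Cpowr (Af k b s (qf k om et u 1)) (al + 1)))%C
     /\ (Af k b s (qf k om et 1 1)
          / (Bf b om et s * Cpowr (Af k b s (qf k om et u 1)) (al + 1)))%C
       = (RtoC 1 / (Bf b om et s * Cpowr (Af k b s (qf k om et u 1)) al)
          + Cpow (- (Ci * RtoC b)) k * Ccos (qf k om et (u - 1) 0)
            / (RtoC (2 ^ (Nat.sub k 1)) * Bf b om et s
               * Cpowr (Af k b s (qf k om et u 1)) (al + 1)))%C).
Proof.
  intros Hk Hal Hbe Hb Ho He Hu Hv.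
  exists 0. intros s Hs.
  assert (HX1 := Xf_bound k om et u v Ho He Hu Hv).
  assert (HX2 : -1 <= Xf k om et u 1 <= 1) by (apply Xf_bound; auto; lra).
  change (Ccos (qf k om et (u - 1) (v - 1))) with (Ccos (Carccos (RtoC (Xf k om et (u - 1) (v - 1))))).
  change (Ccos (qf k om et (u - 1) 0)) with (Ccos (Carccos (RtoC (Xf k om et (u - 1) 0)))).
  rewrite !Ccos_Carccos.
  split.
  { apply (main_gen MC.PU k b om et (al + be) (Xf k om et u v) (Xf k om et (u - 1) (v - 1)) s Hk Hb Hs HX1).
    unfold Xf. ring. }
  { apply (main_gen MC.PU k b om et al (Xf k om et u 1) (Xf k om et (u - 1) 0) s Hk Hb Hs HX2).
    unfold Xf. ring. }
Qed.
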